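(* Let $d\ge2$, $D_d=\bigl(\binom{d-j}{d-i}\bigr)_{1\le i,j\le d}$ (with $\binom{r}{s}=0$ for $s<0$ or $s>r$), and let $j$ be an even integer with $2\le j\le d$. Let $D'_d(j)$ be the $j\times j$ submatrix of $D_d$ formed by its first $j$ columns and by rows $1,\dots,\frac j2$ and $d-\frac j2+1,\dots,d$. Then $\det D'_d(j)=1$, so $D'_d(j)^{-1}\in M_{j\times j}(\mathbb Z)$, and the entry of $D'_d(j)^{-1}$ in row $j$ and column $\frac j2$ equals $\pm1$.
   Context: Standard binomial coefficients, with the convention $\binom{r}{s}=0$ for $s<0$ or $s>r$. *)

(* Defs.v *)
From HB Require Import structures.
From mathcomp Require Import all_boot all_order all_algebra.
Set Implicit Arguments. Unset Strict Implicit. Unset Printing Implicit Defensive.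
Import Order.TTheory GRing.Theory Num.Theory.
Local Open Scope ring_scope.

(* For 1 <= i,j <= d the
   natural subtractions are exact, and mathcomp's 'C(r,s) = 0 for s > r,
   matching the convention binom(r,s)=0 for s>r (s<0 cannot occur). *)
Definition Dentry (d i j : nat) : int := ('C(d - j, d - i))%:Z.

Definition Dmx (d : nat) : 'M[int]_d :=
  \matrix_(i < d, j < d) Dentry d i.+1 j.+1.

(* 1-based row of D_d selected by the a-th (0-based) row of D'_d(j):
   rows 1..j/2, then d-j/2+1..d. *)
Definition Dsub_row (d j a : nat) : nat :=
  if (a < j./2)%N then a.+1 else (d - j + a).+1.

Definition Dsub (d j : nat) : 'M[int]_j :=
  \matrix_(a < j, b < j) Dentry d (Dsub_row d j a) b.+1.

(* Main.v *)
Require Import Defs.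
From HB Require Import structures.
From mathcomp Require Import all_boot all_order all_algebra.
From mathcomp Require Import zify.
Import Order.TTheory GRing.Theory Num.Theory.
Local Open Scope ring_scope.

Lemma det_shift n p (f : nat -> nat -> int) : (p <= n)%N ->
  (forall a b, (a < p)%N -> (a < b)%N -> f a b = 0) ->
  (forall a, (a < p)%N -> f a a = 1) ->
  \det (\matrix_(a < n, b < n) f a b) =
  \det (\matrix_(a < n - p, b < n - p) f (p + a)%N (p + b)%N).
Proof.
elim: p n f => [|p IH] n f Hpn H0 H1; first by rewrite subn0.
case: n Hpn => // n Hpn.
rewrite (expand_det_row _ ord0) big_ord_recl big1 ?addr0; last first.
  by move=> i _; rewrite mxE H0 //= mul0r.
rewrite mxE H1 // mul1r /cofactor /= expr0 mul1r.
have -> : row' ord0 (col' ord0 (\matrix_(a < n.+1, b < n.+1) f a b)) =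
   \matrix_(a < n, b < n) f a.+1 b.+1 by apply/matrixP => a b; rewrite !mxE.
rewrite (IH n (fun a b => f a.+1 b.+1)) //.
- by move=> a b ha hab; apply: H0.
- by move=> a ha; apply: H1.
Qed.

Lemma vand_aux m x a b : (a < m)%N -> (b < m)%N ->
  (\sum_(k < m) (if (a <= k)%N then 'C(x, k - a) else 0) * 'C(m.-1 - b, m.-1 - k))%N
  = 'C(x + (m.-1 - b), m.-1 - a).
Proof.
move=> am bm.
rewrite (reindex_inj rev_ord_inj) /=.
set L := (m.-1 - a)%N; set n := (m.-1 - b)%N.
transitivity (\sum_(i < m) (if (i < L.+1)%N then 'C(n, i) * 'C(x, L - i) else 0))%N.
  apply: eq_bigr => i _.
  case: (leqP a (m - i.+1)) => ha.
    have -> : (i < L.+1)%N by rewrite /L; have := ltn_ord i; lia.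
    have -> : (m.-1 - (m - i.+1) = i)%N by have := ltn_ord i; lia.
    have -> : (m - i.+1 - a = L - i)%N by rewrite /L; have := ltn_ord i; lia.
    by rewrite mulnC.
  have -> : (i < L.+1)%N = false by rewrite /L; have := ltn_ord i; lia.
  by rewrite mul0n.
rewrite -big_mkcond /= -(big_ord_widen _ (fun i => 'C(n, i) * 'C(x, L - i))%N); last by rewrite /L; lia.
by rewrite binomial.Vandermonde addnC.
Qed.

Lemma detbin x m :
  \det (\matrix_(a < m, b < m) ('C(x + (m.-1 - b), m.-1 - a))%:Z) = 1.
Proof.
pose A := \matrix_(a < m, k < m) ((if (a <= k)%N then 'C(x, k - a) else 0)%N)%:Z.
pose P := \matrix_(k < m, b < m) ('C(m.-1 - b, m.-1 - k))%:Z.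
have -> : \matrix_(a < m, b < m) ('C(x + (m.-1 - b), m.-1 - a))%:Z = A *m P.
  apply/matrixP => a b; rewrite !mxE -vand_aux //.
  rewrite (big_morph Posz PoszD (erefl _)).
  by apply: eq_bigr => k _; rewrite !mxE PoszM.
rewrite det_mulmx -det_tr !det_trig.
- rewrite !big1 ?mulr1 // => i _; rewrite !mxE ?leqnn ?subnn ?bin0 ?binn //.
- apply/is_trig_mxP => i j ij; rewrite !mxE bin_small //.
  have := ltn_ord j; lia.
- apply/is_trig_mxP => i j ij; rewrite !mxE.
  by have -> : (j <= i)%N = false by lia.
Qed.
Theorem corollary5p12 (d j : nat) :
  (2 <= d)%N -> ~~ odd j -> (2 <= j)%N -> (j <= d)%N ->
  \det (Dsub d j) = 1 /\
  Dsub d j \in unitmx /\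
  (forall r c : 'I_j, nat_of_ord r = j.-1 -> nat_of_ord c = (j./2).-1 ->
     invmx (Dsub d j) r c = 1 \/ invmx (Dsub d j) r c = -1).
Proof.
move=> d2 ev j2 jd.
have [h Ej] : exists h, j = (h + h)%N.
  exists j./2; rewrite addnn; by rewrite -[LHS](odd_double_half j) (negbTE ev).
subst j.
have hh : ((h + h)./2 = h)%N by rewrite addnn doubleK.
have H0 : forall a b, (a < h)%N -> (a < b)%N ->
    Dentry d (Dsub_row d (h + h) a) b.+1 = 0.
  move=> a b ha hab; rewrite /Dentry /Dsub_row hh ha bin_small //; lia.
have H1 : forall a, (a < h)%N -> Dentry d (Dsub_row d (h + h) a) a.+1 = 1.
  by move=> a ha; rewrite /Dentry /Dsub_row hh ha binn.
have detM : \det (Dsub d (h + h)) = 1.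
  rewrite /Dsub (@det_shift (h + h) h (fun a b => Dentry d (Dsub_row d (h + h) a) b.+1)) //; last by lia.
  rewrite -[RHS](detbin (d - (h + h)) (h + h - h)).
  congr (\det _); apply/matrixP => a b; rewrite !mxE /Dentry /Dsub_row hh.
  rewrite ltnNge leq_addr /=.
  have := ltn_ord a; have := ltn_ord b => bh ah.
  congr (Posz 'C(_, _)); lia.
split => //.
split; first by rewrite unitmxE detM unitr1.
move=> r c Er Ec.
rewrite /invmx unitmxE detM unitr1 invr1 scale1r mxE /cofactor.
suff -> : \det (row' c (col' r (Dsub d (h + h)))) = 1.
  rewrite mulr1 -signr_odd; case: (odd _); [right|left]; by rewrite ?expr1 ?expr0.
have -> : row' c (col' r (Dsub d (h + h))) =
  \matrix_(a < (h + h).-1, b < (h + h).-1)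
     Dentry d (Dsub_row d (h + h) (bump h.-1 a)) b.+1.
  apply/matrixP => a b; rewrite !mxE /= Ec.
  have -> : bump r b = b by rewrite /bump Er leqNgt ltn_ord.
  by rewrite hh.
rewrite (@det_shift _ h.-1 (fun a b => Dentry d (Dsub_row d (h + h) (bump h.-1 a)) b.+1)); last 3 first.
- lia.
- move=> a b ha hab; rewrite /bump leqNgt ha /= add0n; apply: H0 => //; lia.
- move=> a ha; rewrite /bump leqNgt ha /= add0n; apply: H1; lia.
rewrite -[RHS](detbin (d - (h + h)).+1 ((h + h).-1 - h.-1)).
congr (\det _); apply/matrixP => a b; rewrite !mxE.
have -> : bump h.-1 (h.-1 + a) = (h + a)%N by rewrite /bump leq_addr add1n; lia.
rewrite /Dentry /Dsub_row hh ltnNge leq_addr /=.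
have := ltn_ord a; have := ltn_ord b => bh ah.
congr (Posz 'C(_, _)); lia.
Qed.
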